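(* Let $a_0<a_1<\dots<a_n$ be positive integers with $\gcd(a_0,\dots,a_n)=1$ and let $t\in\mathbb{Z}_{\ge0}$. If the equation $a_0x_0+\dots+a_nx_n=t$ has a solution $x\in\mathbb{Z}_{\ge 0}^{n+1}$, then it has a solution $x\in\mathbb{Z}_{\ge0}^{n+1}$ whose support $\mathrm{supp}(x)=\{i: x_i\neq 0\}$ satisfies $|\mathrm{supp}(x)|\le \log_2(a_0)+1$. *)

(* Defs.v *)
From mathcomp Require Import all_boot.
Set Implicit Arguments. Unset Strict Implicit. Unset Printing Implicit Defensive.

Definition supp (m : nat) (x : 'I_m -> nat) : {set 'I_m} := [set i | x i != 0].

Definition lin (m : nat) (a x : 'I_m -> nat) : nat := \sum_(i < m) a i * x i.

(* Main.v *)
Require Import Defs.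
From mathcomp Require Import all_boot zify.

Section S.
Variables (n : nat) (a : 'I_n.+1 -> nat) (a0 : nat) (a0_pos : 0 < a0).
Variable (a_pos : forall i, 0 < a i).

Definition sig (T : {set 'I_n.+1}) := \sum_(i in T) a i.

Lemma pigeon (S : {set 'I_n.+1}) : a0 < 2 ^ #|S| ->
  exists T1 T2 : {set 'I_n.+1}, [/\ T1 \subset S, T2 \subset S, T1 != T2 & sig T1 = sig T2 %[mod a0]].
Proof.
move=> H.
pose f (T : {set 'I_n.+1}) : 'I_a0 := Ordinal (ltn_pmod (sig T) a0_pos).
have : ~~ dinjectiveb f (powerset S).
  apply/negP => /dinjectiveP inj.
  have := card_in_imset inj; rewrite card_powerset => E.
  have := max_card [set f x | x in powerset S]; rewrite E card_ord => /leq_ltn_trans/(_ H).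
  by rewrite ltnn.
case/dinjectivePn => T1 T1P [T2 /andP[ne T2P] eq].
exists T1, T2; split.
- by rewrite -powersetE.
- by rewrite -powersetE.
- by rewrite eq_sym.
- by move: eq => /(congr1 val).
Qed.

Lemma sig0 (A : {set 'I_n.+1}) : sig A = 0 -> A = set0.
Proof.
move=> H; apply/setP => i; rewrite inE; apply/negP => iA.
move: H; rewrite /sig (bigD1 i) //=; have := a_pos i; lia.
Qed.

Lemma disj_pair (S : {set 'I_n.+1}) : a0 < 2 ^ #|S| ->
  exists U1 U2 : {set 'I_n.+1}, [/\ U1 \subset S, U2 \subset S, [disjoint U1 & U2],
     U1 != set0 & (sig U2 <= sig U1) && (a0 %| sig U1 - sig U2)].
Proof.
move=> /pigeon [T1 [T2 [s1 s2 ne em]]].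
have key : forall T1 T2 : {set 'I_n.+1}, T1 \subset S -> T2 \subset S -> T1 != T2 ->
   sig T1 = sig T2 %[mod a0] -> sig (T2 :\: T1) <= sig (T1 :\: T2) ->
   exists U1 U2 : {set 'I_n.+1}, [/\ U1 \subset S, U2 \subset S, [disjoint U1 & U2],
     U1 != set0 & (sig U2 <= sig U1) && (a0 %| sig U1 - sig U2)].
  move=> {}T1 {}T2 {}s1 {}s2 {}ne {}em le.
  have E1 : sig T1 = sig (T1 :&: T2) + sig (T1 :\: T2) by rewrite /sig (big_setID T2).
  have E2 : sig T2 = sig (T1 :&: T2) + sig (T2 :\: T1) by rewrite /sig (big_setID T1) setIC.
  exists (T1 :\: T2), (T2 :\: T1); split.
  - by apply: subset_trans s1; apply: subsetDl.
  - by apply: subset_trans s2; apply: subsetDl.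
  - rewrite -setI_eq0; apply/eqP/setP => i; rewrite !inE; by case: (i \in T1); case: (i \in T2).
  - apply/negP => /eqP e0; move: le; rewrite e0 /sig big_set0 leqn0 => /eqP/sig0 e1.
    case/negP: ne; rewrite eqEsubset -!setD_eq0 e0 e1; by rewrite eqxx.
  - rewrite le /= -eqn_mod_dvd //.
    apply/eqP; move: em; rewrite E1 E2 => /eqP; rewrite eqn_modDl => /eqP ->; by [].
case: (leqP (sig (T2 :\: T1)) (sig (T1 :\: T2))) => le.
  by apply: (key T1 T2).
apply: (key T2 T1) => //; first by rewrite eq_sym.
exact: ltnW.
Qed.

Lemma step (x : 'I_n.+1 -> nat) : a ord0 = a0 -> a0 < 2 ^ #|supp x :\ ord0| ->
  exists y, lin a y = lin a x /\ #|supp y :\ ord0| < #|supp x :\ ord0|.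
Proof.
move=> a0E /disj_pair [U1 [U2 [s1 s2 d ne /andP[le dv]]]].
have [j jU1] : exists j, j \in U1.
  by case/set0Pn: ne => j; exists j.
case: (arg_minnP x jU1) => k kU1 kmin.
set c := x k.
set q := (sig U1 - sig U2) %/ a0.
have qE : q * a0 = sig U1 - sig U2 by rewrite divnK.
have inS : forall i, i \in supp x :\ ord0 -> (i != ord0) && (x i != 0).
  by move=> i; rewrite !inE.
have d' : forall i, i \in U1 -> i \in U2 -> False.
  by move=> i i1 i2; move: (disjointFr d i1); rewrite i2.
pose y i := if i == ord0 then x i + c * q else if i \in U1 then x i - c
            else if i \in U2 then x i + c else x i.
exists y; split.
  have pt : forall i, a i * y i + c * ((i \in U1) * a i) =
     a i * x i + c * ((i \in U2) * a i) + (i == ord0) * (a0 * c * q).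
    move=> i; rewrite /y; case: eqP => [->|ne0].
      have n1 : ord0 \in U1 = false.
        by apply/negP => /(subsetP s1) /inS; rewrite eqxx.
      have n2 : ord0 \in U2 = false.
        by apply/negP => /(subsetP s2) /inS; rewrite eqxx.
      rewrite n1 n2 a0E /=; lia.
    case i1: (i \in U1).
      have i2: i \in U2 = false by apply/negP => /(d' i i1).
      have := kmin i i1; rewrite i2 /= -/c; nia.
    case i2: (i \in U2) => /=; lia.
  have E : \sum_(i < n.+1) (a i * y i + c * ((i \in U1) * a i)) =
     \sum_(i < n.+1) (a i * x i + c * ((i \in U2) * a i) + (i == ord0) * (a0 * c * q)).
    by apply: eq_bigr => i _; exact: pt.
  have sigE : forall U, sig U = \sum_(i < n.+1) (i \in U) * a i.
    move=> U; rewrite /sig big_mkcond; apply: eq_bigr => i _.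
    by case: (i \in U); rewrite ?mul1n ?mul0n.
  have oE : \sum_(i < n.+1) (i == ord0) * (a0 * c * q) = a0 * c * q.
    rewrite (bigD1 ord0) //= big1 ?eqxx ?mul1n ?addn0 // => i /negPf ->.
    by rewrite mul0n.
  move: E; rewrite !big_split /= oE -!big_distrr /= -!sigE.
  rewrite -/(lin a y) -/(lin a x).
  have : sig U2 + q * a0 = sig U1 by rewrite qE; lia.
  nia.
have sub : supp y :\ ord0 \subset (supp x :\ ord0) :\ k.
  apply/subsetP => i; rewrite !inE /y => /andP[ne0]; rewrite (negPf ne0) => /=.
  case i1: (i \in U1).
    have := kmin i i1; rewrite -/c => le1 H.
    have ik : i != k by apply: contraNneq H => ->; rewrite subnn.
    rewrite ik /=; lia.
  case i2: (i \in U2) => H.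
    have := subsetP s2 i i2; rewrite !inE => /andP[_ ->].
    rewrite andbT; apply: contraTneq i2 => ->; by apply/negP => /(d' k kU1).
  by rewrite H andbT; apply: contraFneq i1 => ->.
apply: leq_ltn_trans (subset_leq_card sub) _.
by rewrite [X in _ < X](cardsD1 k) (subsetP s1 k kU1).
Qed.
End S.


Theorem corollary1 (n : nat) (a : 'I_n.+1 -> nat)
  (a_pos : 0 < a ord0)
  (a_incr : forall i j : 'I_n.+1, (i < j)%N -> a i < a j)
  (a_gcd : \big[gcdn/0]_(i < n.+1) a i = 1)
  (t : nat) :
  (exists x : 'I_n.+1 -> nat, lin a x = t) ->
  exists x : 'I_n.+1 -> nat, lin a x = t /\ #|supp x| <= trunc_log 2 (a ord0) + 1.
Proof.
have apos : forall i, 0 < a i.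
  move=> i; case: (posnP i) => [i0|ip].
    by have -> : i = ord0 by apply: val_inj.
  exact: ltn_trans a_pos (a_incr ord0 i ip).
have cD : forall x : 'I_n.+1 -> nat, #|supp x| <= #|supp x :\ ord0| + 1.
  by move=> y; rewrite (cardsD1 ord0 (supp y)) addnC leq_add2l leq_b1.
case=> x0 Hx0.
suff H : forall m x, #|supp x :\ ord0| <= m -> lin a x = t ->
  exists x : 'I_n.+1 -> nat, lin a x = t /\ #|supp x| <= trunc_log 2 (a ord0) + 1.
  exact: (H _ x0 (leqnn _) Hx0).
elim=> [|m IH] x Hm Hx.
  exists x; split => //; apply: leq_trans (cD x) _; lia.
case: (leqP #|supp x :\ ord0| (trunc_log 2 (a ord0))) => hl.
  exists x; split => //; apply: leq_trans (cD x) _; lia.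
have lt : a ord0 < 2 ^ #|supp x :\ ord0|.
  apply: leq_trans (@trunc_log_ltn 2 (a ord0) isT) _.
  by rewrite leq_exp2l.
have [y [Hy Hc]] := @step n a (a ord0) a_pos apos x (erefl _) lt.
apply: (IH y); first by lia.
by rewrite Hy.
Qed.
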